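(* For any graph $G$ of order $n$, $\gamma_{qtR}(G)\le n-\rho(G)(\delta(G)-2)$.
   Context: All graphs are finite, simple and undirected; $\delta(G)$ is the minimum degree. A set $B\subseteq V(G)$ is a packing if $N[u]\cap N[v]=\emptyset$ for all distinct $u,v\in B$; the packing number $\rho(G)$ is the maximum size of a packing. For $f:V(G)\to\{0,1,2\}$ write $V_i=\{v:f(v)=i\}$; weight $\omega(f)=|V_1|+2|V_2|$. A quasi-total Roman dominating function (QTRDF) is an $f$ such that every vertex labeled $0$ is adjacent to a vertex labeled $2$, and every vertex isolated in the subgraph induced by $V_1\cup V_2$ has label $1$; $\gamma_{qtR}(G)$ is the minimum weight of a QTRDF. *)

(* Defs.v *)
From mathcomp Require Import all_boot all_order all_algebra.
Set Implicit Arguments. Unset Strict Implicit. Unset Printing Implicit Defensive.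

(* A finite simple graph: vertex type T : finType, adjacency e : rel T,
   assumed symmetric and irreflexive (hypotheses of the theorem). *)

Section Graph.
Variables (T : finType) (e : rel T).

Definition onbhd (v : T) : {set T} := [set u | e v u].
Definition cnbhd (v : T) : {set T} := v |: onbhd v.

Definition deg (v : T) : nat := #|onbhd v|.

(* minimum degree; for the empty graph this is #|T| = 0 *)
Definition min_deg : nat := \big[minn/#|T|]_(v : T) deg v.

Definition packing (B : {set T}) : bool :=
  [forall u in B, forall v in B, (u != v) ==> [disjoint cnbhd u & cnbhd v]].

Definition packing_number : nat := \max_(B : {set T} | packing B) #|B|.

Definition weight (f : {ffun T -> 'I_3}) : nat := \sum_(v : T) (f v : nat).

Definition qtrdf (f : {ffun T -> 'I_3}) : bool :=
  [forall v, ((f v : nat) == 0) ==> [exists u, e v u && ((f u : nat) == 2)]] &&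
  [forall v, (((f v : nat) != 0) && [forall u, e v u ==> ((f u : nat) == 0)])
               ==> ((f v : nat) == 1)].

(* minimum weight of a QTRDF; the all-ones labelling is a QTRDF of weight
   #|T|, so taking #|T| as the neutral element of minn is harmless *)
Definition gamma_qtR : nat := \big[minn/#|T|]_(f | qtrdf f) weight f.

End Graph.

(* Main.v *)
Require Import Defs.
From mathcomp Require Import all_boot all_order all_algebra.
From mathcomp Require Import zify.
Set Implicit Arguments. Unset Strict Implicit.

Lemma card_union_seq (T : finType) (e : rel T) (s : seq T) :
  uniq s ->
  (forall v w x, v \in s -> w \in s -> v != w -> e v x -> e w x -> False) ->
  #|[set x | has (fun v => e v x) s]| = \sum_(v <- s) deg e v.
Proof.
elim: s => [|v s IH] /= Hu Hd.
  rewrite big_nil; apply/eqP; rewrite cards_eq0; apply/eqP/setP=> x.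
  by rewrite !inE.
case/andP: Hu => vns us.
rewrite big_cons -IH //; last first.
  by move=> a b x ha hb; apply: Hd; rewrite inE ?ha ?hb orbT.
have -> : [set x | e v x || has (fun v => e v x) s]
          = onbhd e v :|: [set x | has (fun v => e v x) s].
  by apply/setP=> x; rewrite !inE.
rewrite cardsU.
suff -> : onbhd e v :&: [set x | has (fun v => e v x) s] = set0.
  by rewrite cards0 subn0.
apply/setP=> x; rewrite !inE; apply/negbTE/negP => /andP [evx /hasP [w ws ewx]].
apply: (Hd v w x) => //; first by rewrite mem_head.
  by rewrite inE ws orbT.
by apply: contraNneq vns => ->.
Qed.

Lemma packP (T : finType) (e : rel T) (B : {set T}) u v x :
  packing e B -> u \in B -> v \in B -> u != v ->
  x \in cnbhd e u -> x \in cnbhd e v -> False.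
Proof.
move=> H uB vB ne xu xv.
move: H => /forallP/(_ u)/implyP/(_ uB)/forallP/(_ v)/implyP/(_ vB)/implyP/(_ ne).
rewrite -setI_eq0 => /eqP/setP/(_ x).
by rewrite in_setI xu xv in_set0.
Qed.

Definition gfun (T : finType) (e : rel T) (v : T) : T := odflt v [pick u | e v u].

Lemma gfunP (T : finType) (e : rel T) v : 0 < deg e v -> e v (gfun e v).
Proof.
rewrite /gfun; case: pickP => [u //|H].
by rewrite /deg card_gt0 => /set0Pn [u]; rewrite inE H.
Qed.

Lemma sum_mem (T : finType) (A : {set T}) : \sum_(x : T) ((x \in A) : nat) = #|A|.
Proof.
rewrite -sum1_card [RHS]big_mkcond /=; apply: eq_bigr => x _.
by case: (x \in A).
Qed.

Lemma bigmin_le (I : eqType) (s : seq I) (P : pred I) (F : I -> nat) idx i :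
  i \in s -> P i -> \big[minn/idx]_(j <- s | P j) F j <= F i.
Proof.
elim: s => [|j s IH]; first by []. rewrite inE => /orP [/eqP <- Pi|iS Pi].
  by rewrite big_cons Pi geq_minl.
rewrite big_cons; case: (P j); last exact: IH.
by rewrite geq_min IH ?orbT.
Qed.

Theorem mainTheorem8 (T : finType) (e : rel T)
  (e_sym : symmetric e) (e_irr : irreflexive e) :
  ((gamma_qtR e)%:Z <= (#|T|)%:Z
     - (packing_number e)%:Z * ((min_deg e)%:Z - 2%:Z))%R.
Proof.
have gle : gamma_qtR e <= #|T|.
  rewrite /gamma_qtR; elim/big_rec: _ => // i x _ hx.
  by rewrite geq_min hx orbT.
have mdle : forall v, min_deg e <= deg e v.
  by move=> v; rewrite /min_deg; apply: bigmin_le; rewrite ?mem_index_enum.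
case: (leqP (min_deg e) 2) => Hd.
  nia.
have P0 : packing e set0.
  by apply/forallP => u; rewrite in_set0.
have [B PB HB] : exists2 B, packing e B & packing_number e = #|B|.
  rewrite /packing_number (bigmax_eq_arg _ P0).
  by case: arg_maxnP => // i Pi _; exists i.
set D := [set x | has (fun v => e v x) (enum B)].
set U := [set gfun e v | v in B].
set Z := D :\: U.
pose f : {ffun T -> 'I_3} :=
  [ffun x => if x \in B then inord 2 else if x \in Z then inord 0 else inord 1].
have fval : forall x, (f x : nat) = if x \in B then 2 else if x \in Z then 0 else 1.
  by move=> x; rewrite ffunE; case: ifP => _; [|case: ifP => _]; rewrite inordK.
have cB : forall v x, e v x -> x \in cnbhd e v.
  by move=> v x evx; rewrite /cnbhd /onbhd !inE evx orbT.
have cS : forall v, v \in cnbhd e v.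
  by move=> v; rewrite /cnbhd !inE eqxx.
have DnB : forall x, x \in D -> x \notin B.
  move=> x; rewrite inE => /hasP [w]; rewrite mem_enum => wB ewx.
  apply/negP => xB.
  case: (eqVneq x w) => [exw|nxw].
    by move: ewx; rewrite exw e_irr.
  exact: (packP PB xB wB nxw (cS x) (cB _ _ ewx)).
have qf : qtrdf e f.
  apply/andP; split.
    apply/forallP => v; apply/implyP; rewrite fval.
    case: ifP => vB //; case: ifP => vZ // _.
    move: vZ; rewrite inE => /andP [_]; rewrite inE => /hasP [w].
    rewrite mem_enum => wB ewv.
    by apply/existsP; exists w; rewrite e_sym ewv fval wB.
  apply/forallP => v; apply/implyP => /andP [nz /forallP H].
  move: nz; rewrite fval.
  case: ifP => vB; last by case: ifP.
  move=> _; exfalso.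
  have gv := gfunP (leq_trans (ltnW (ltnW Hd)) (mdle v)).
  move: (H (gfun e v)); rewrite gv /= fval.
  have -> : (gfun e v \in Z) = false.
    by rewrite inE (imset_f (gfun e) vB).
  by case: ifP.
have gw : gamma_qtR e <= weight f.
  by rewrite /gamma_qtR; apply: bigmin_le; rewrite ?mem_index_enum.
have wE : weight f = 2 * #|B| + #|~: (B :|: Z)|.
  rewrite /weight -sum_mem -sum_mem big_distrr -big_split /=.
  apply: eq_bigr => x _; rewrite fval in_setC in_setU.
  by case: (x \in B); case: (x \in Z).
have BZ : #|B :|: Z| = #|B| + #|Z|.
  rewrite cardsU.
  suff -> : B :&: Z = set0 by rewrite cards0 subn0.
  apply/setP => x; rewrite !inE; apply/negbTE/negP => /and3P [xB _ xD].
  by have := DnB x; rewrite inE xB => /(_ xD).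
have cC := cardsC (B :|: Z).
have ZD : #|D| <= #|Z| + #|U|.
  rewrite /Z cardsD.
  have : #|D :&: U| <= #|U| by apply: subset_leq_card; apply: subsetIr.
  lia.
have UB : #|U| <= #|B| by apply: leq_imset_card.
have Dsum : #|D| = \sum_(v in B) deg e v.
  rewrite /D card_union_seq ?enum_uniq ?big_enum //.
  move=> v w x; rewrite !mem_enum => vB wB ne evx ewx.
  exact: (packP PB vB wB ne (cB _ _ evx) (cB _ _ ewx)).
have Dge : #|B| * min_deg e <= #|D|.
  rewrite Dsum -sum_nat_const; apply: leq_sum => v _; exact: mdle.
have b2 : #|B| * 2 <= #|B| * min_deg e by rewrite leq_mul2l ltnW ?orbT.
have nat_goal : gamma_qtR e + #|B| * (min_deg e - 2) <= #|T|.
  rewrite mulnBr.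
  move: Dge b2; set bd := #|B| * min_deg e => Dge b2.
  lia.
rewrite HB.
nia.
Qed.
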